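(* Let $\sigma$ be an extended signature, $H\in\mathfrak a\cap\mathfrak m_{\sigma,1}$, and $\mathfrak l_{H,\sigma}=\mathrm{Ad}_{\exp H}\mathfrak l_\sigma$. Then $\mathfrak l_{H,\sigma}\cap\mathfrak k=\mathfrak t$ if and only if $\alpha(H)\ne0$ for every root $\alpha$ with $\sigma(\alpha)=1$.
   Context: $\mathfrak g$ is complex semisimple, $\mathfrak k$ a compact real form with complex conjugation $\theta$, $G$ the adjoint group, $\mathfrak t\subset\mathfrak k$ maximal abelian, $\mathfrak h=\mathfrak t\otimes\mathbb C$, $\mathfrak a=i\mathfrak t$, roots $\Sigma$, positive roots $\Sigma_+$, simple roots $\alpha_1,\dots,\alpha_l$. An extended signature is a map $\sigma:\Sigma\to\{-1,0,1\}$ with $\sigma(\sum_im_i\alpha_i)=\prod_i\sigma(\alpha_i)^{m_i}$. Let $S_\sigma=\{\alpha_i:\sigma(\alpha_i)\ne0\}$, $[S_\sigma]$ the roots in its span, $\mathfrak m_\sigma=\mathfrak h\oplus\bigoplus_{\alpha\in[S_\sigma]}\mathfrak g_\alpha$, $\mathfrak m_{\sigma,1}=[\mathfrak m_\sigma,\mathfrak m_\sigma]$, $\mathfrak n_\sigma=\bigoplus_{\alpha\in\Sigma_+\setminus[S_\sigma]}\mathfrak g_\alpha$, $a_\sigma$ the automorphism of $\mathfrak m_\sigma$ acting as identity on $\mathfrak h$ and by the scalar $\sigma(\alpha)$ on $\mathfrak g_\alpha$, and $\mathfrak l_\sigma=\{X\in\mathfrak m_\sigma:a_\sigma\theta X=X\}+\mathfrak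 n_\sigma$ (a Lagrangian subalgebra of $\mathfrak g$ for the imaginary part of the Killing form). *)

(* Defs.v *)
From mathcomp Require Import all_boot all_order all_algebra.
From mathcomp Require Import complex.
From mathcomp Require Import all_classical all_reals all_analysis.

Set Implicit Arguments.
Unset Strict Implicit.
Unset Printing Implicit Defensive.

Import Order.TTheory GRing.Theory Num.Theory.
Import numFieldNormedType.Exports.
Local Open Scope classical_set_scope.
Local Open Scope ring_scope.

(* The complex Lie algebra g is modelled as C^n = 'rV[R[i]]_n (any finite
   dimensional complex vector space is of this form) with a bracket [br]. *)

Section LieSetup.
Variables (R : realType) (n : nat).
Local Notation C := (R[i]).
Local Notation V := ('rV[C]_n).

Definition lie_bracket (br : V -> V -> V) : Prop :=
  [/\ (forall (c : C) x y z, br (c *: x + y) z = c *: br x z + br y z),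
      (forall (c : C) x y z, br x (c *: y + z) = c *: br x y + br x z),
      (forall x, br x x = 0) &
      (forall x y z, br x (br y z) + br y (br z x) + br z (br x y) = 0)].

Definition ad_mx (br : V -> V -> V) (x : V) : 'M[C]_n := lin1_mx (br x).
Definition killing (br : V -> V -> V) (x y : V) : C :=
  \tr (ad_mx br x *m ad_mx br y).

(* semisimple (Cartan's criterion form): nondegenerate Killing form. *)
Definition semisimple (br : V -> V -> V) : Prop :=
  forall x, (forall y, killing br x y = 0) -> x = 0.

(* theta is the complex conjugation of g w.r.t. a compact real form k:
   a conjugate-linear involutive Lie algebra automorphism (of g as real
   Lie algebra) whose fixed real form k has negative definite Killing form. *)
Definition compact_conjugation (br : V -> V -> V) (theta : V -> V) : Prop :=
  [/\ (forall x y, theta (x + y) = theta x + theta y),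
      (forall (c : C) x, theta (c *: x) = (c^*)%C *: theta x),
      (forall x, theta (theta x) = x),
      (forall x y, theta (br x y) = br (theta x) (theta y)) &
      (forall x, theta x = x -> x != 0 -> killing br x x < 0)].

Definition kset (theta : V -> V) : V -> Prop := fun x => theta x = x.

Definition real_subspace (P : V -> Prop) : Prop :=
  [/\ P 0, (forall x y, P x -> P y -> P (x + y)) &
      (forall (r : R) x, P x -> P ((r%:C)%C *: x))].

Definition max_abelian_in (br : V -> V -> V) (K t : V -> Prop) : Prop :=
  [/\ real_subspace t, (forall x, t x -> K x),
      (forall x y, t x -> t y -> br x y = 0) &
      (forall s : V -> Prop, real_subspace s -> (forall x, s x -> K x) ->
         (forall x y, s x -> s y -> br x y = 0) ->
         (forall x, t x -> s x) -> forall x, s x -> t x)].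

Definition hset (t : V -> Prop) : V -> Prop :=
  fun x => exists A B, [/\ t A, t B & x = A + 'i *: B].
Definition aset (t : V -> Prop) : V -> Prop :=
  fun x => exists B, t B /\ x = 'i *: B.

(* root spaces and roots (a root is given by a functional; only its values
   on h matter) *)
Definition root_space (br : V -> V -> V) (t : V -> Prop) (al : V -> C) :
  V -> Prop := fun X => forall Z, hset t Z -> br Z X = al Z *: X.
Definition is_root (br : V -> V -> V) (t : V -> Prop) (al : V -> C) : Prop :=
  (exists Z, hset t Z /\ al Z != 0) /\
  (exists X, X != 0 /\ root_space br t al X).

Variable l : nat.

Definition root_coeffs (t : V -> Prop) (alpha : 'I_l -> V -> C)
  (al : V -> C) (m : 'I_l -> int) : Prop :=
  forall Z, hset t Z -> al Z = \sum_(i < l) (m i)%:~R * alpha i Z.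

Definition simple_system (br : V -> V -> V) (t : V -> Prop)
  (alpha : 'I_l -> V -> C) : Prop :=
  [/\ (forall i, is_root br t (alpha i)),
      (forall c : 'I_l -> C,
         (forall Z, hset t Z -> \sum_(i < l) c i * alpha i Z = 0) ->
         forall i, c i = 0) &
      (forall al, is_root br t al -> exists m, root_coeffs t alpha al m /\
         ((forall i, 0 <= m i) \/ (forall i, m i <= 0)))].

Definition is_pos_root br t alpha (al : V -> C) : Prop :=
  is_root br t al /\ exists m, root_coeffs t alpha al m /\ forall i, 0 <= m i.

(* extended signature, given by its values s i = sigma(alpha_i) in {-1,0,1};
   sigma(sum m_i alpha_i) = prod_i s_i^{m_i}, read as prod_i s_i^{|m_i|}
   (identical for s_i = +-1; for s_i = 0 it is 0 iff m_i <> 0). *)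
Definition ext_signature (s : 'I_l -> int) : Prop :=
  forall i, s i \in [:: -1; 0; 1].
Definition sigma_val (s : 'I_l -> int) (m : 'I_l -> int) : int :=
  \prod_(i < l) (s i) ^+ `|m i|%N.

Definition in_span_S br t alpha (s : 'I_l -> int) (al : V -> C) : Prop :=
  is_root br t al /\ exists m, root_coeffs t alpha al m /\
    forall i, m i != 0 -> s i != 0.

Definition span_of (P : V -> Prop) : V -> Prop :=
  fun X => exists (k : nat) (Y : 'I_k -> V),
    (forall j, P (Y j)) /\ X = \sum_(j < k) Y j.

Definition m_sigma br t alpha s : V -> Prop :=
  span_of (fun Y => hset t Y \/
    exists al, in_span_S br t alpha s al /\ root_space br t al Y).

Definition m_sigma1 br t alpha s : V -> Prop :=
  span_of (fun Y => exists P Q, [/\ m_sigma br t alpha s P,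
                                   m_sigma br t alpha s Q & Y = br P Q]).

Definition n_sigma br t alpha s : V -> Prop :=
  span_of (fun Y => exists al, [/\ is_pos_root br t alpha al,
                                  ~ in_span_S br t alpha s al &
                                  root_space br t al Y]).

(* a_sigma X = Y : a_sigma is the identity on h and sigma(al) on g_al *)
Definition a_sigma_rel br t alpha s (X Y : V) : Prop :=
  exists (Z : V) (k : nat) (al : 'I_k -> V -> C) (m : 'I_k -> 'I_l -> int)
         (W : 'I_k -> V),
    [/\ hset t Z,
        (forall j, [/\ in_span_S br t alpha s (al j),
                       root_coeffs t alpha (al j) (m j) &
                       root_space br t (al j) (W j)]),
        X = Z + \sum_(j < k) W j &
        Y = Z + \sum_(j < k) ((sigma_val s (m j))%:~R : C) *: W j].

Definition l_sigma br theta t alpha s : V -> Prop :=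
  fun X => exists A B,
    [/\ m_sigma br t alpha s A, a_sigma_rel br t alpha s (theta A) A,
        n_sigma br t alpha s B & X = A + B].

(* Ad_{exp H} X = exp(ad H) X = sum_k (ad H)^k X / k!  (series converging
   coordinatewise) *)
Definition Ad_exp_rel (br : V -> V -> V) (H X Y : V) : Prop :=
  forall j : 'I_n,
    ((fun N : nat => complex.Re
        (\sum_(k < N) ((k`!)%:R)^-1 * (iter k (br H) X) 0 j)) @ \oo -->
       complex.Re (Y 0 j)) /\
    ((fun N : nat => complex.Im
        (\sum_(k < N) ((k`!)%:R)^-1 * (iter k (br H) X) 0 j)) @ \oo -->
       complex.Im (Y 0 j)).

Definition l_H_sigma br theta t alpha s (H : V) : V -> Prop :=
  fun Y => exists X, l_sigma br theta t alpha s X /\ Ad_exp_rel br H X Y.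

End LieSetup.

(* Main.v *)
Require Import Defs.
From mathcomp Require Import all_boot all_order all_algebra.
From mathcomp Require Import complex.
From mathcomp Require Import all_classical all_reals all_analysis.
From mathcomp Require Import ring lra.
Import Order.TTheory GRing.Theory Num.Theory.
Import numFieldNormedType.Exports.
Local Open Scope ring_scope.

Section P1.
Context {R : realType} {n : nat} {br : 'rV[R[i]]_n -> 'rV[R[i]]_n -> 'rV[R[i]]_n}.
Hypothesis Hbr : lie_bracket br.

Lemma brDl x y z : br (x + y) z = br x z + br y z.
Proof. by case: Hbr => H1 _ _ _; have := H1 1 x y z; rewrite !scale1r. Qed.
Lemma brDr x y z : br x (y + z) = br x y + br x z.
Proof. by case: Hbr => _ H1 _ _; have := H1 1 x y z; rewrite !scale1r. Qed.
Lemma br0l z : br 0 z = 0.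
Proof. have := brDl 0 0 z; rewrite addr0 => /(congr1 (fun v => v - br 0 z)).
by rewrite subrr addrK => H; apply/esym. Qed.
Lemma br0r z : br z 0 = 0.
Proof. have := brDr z 0 0; rewrite addr0 => /(congr1 (fun v => v - br z 0)).
by rewrite subrr addrK => H; apply/esym. Qed.
Lemma brZl c x z : br (c *: x) z = c *: br x z.
Proof. by case: Hbr => H1 _ _ _; have := H1 c x 0 z; rewrite !addr0 br0l addr0. Qed.
Lemma brZr c x z : br z (c *: x) = c *: br z x.
Proof. by case: Hbr => _ H1 _ _; have := H1 c z x 0; rewrite !addr0 br0r addr0. Qed.
Lemma brNl x z : br (- x) z = - br x z.
Proof. by rewrite -scaleN1r brZl scaleN1r. Qed.
Lemma brNr x z : br z (- x) = - br z x.
Proof. by rewrite -scaleN1r brZr scaleN1r. Qed.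
Lemma brBr x y z : br x (y - z) = br x y - br x z.
Proof. by rewrite brDr brNr. Qed.
Lemma brBl x y z : br (x - y) z = br x z - br y z.
Proof. by rewrite brDl brNl. Qed.
Lemma br_anti x y : br x y = - br y x.
Proof.
case: Hbr => _ _ H3 _; have := H3 (x + y).
by rewrite brDl !brDr !H3 add0r addr0 => /eqP; rewrite addr_eq0 => /eqP.
Qed.
Lemma br_sumr I (r : seq I) (P : pred I) (F : I -> _) x :
  br x (\sum_(i <- r | P i) F i) = \sum_(i <- r | P i) br x (F i).
Proof. by elim/big_rec2: _ => [|i a b _ <-]; rewrite ?br0r ?brDr. Qed.
Lemma br_suml I (r : seq I) (P : pred I) (F : I -> _) x :
  br (\sum_(i <- r | P i) F i) x = \sum_(i <- r | P i) br (F i) x.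
Proof. by elim/big_rec2: _ => [|i a b _ <-]; rewrite ?br0l ?brDl. Qed.

Lemma adP x u : u *m ad_mx br x = br x u.
Proof.
rewrite /ad_mx [u in RHS]row_sum_delta br_sumr; apply/rowP=> j.
rewrite !mxE summxE; apply: eq_bigr => k _.
by rewrite brZr !mxE.
Qed.

Lemma mx_ext (A B : 'M[R[i]]_n) : (forall u : 'rV_n, u *m A = u *m B) -> A = B.
Proof. by move=> H; apply/row_matrixP => i; have := H (delta_mx 0 i); rewrite -!rowE. Qed.

Lemma ad_br x y : ad_mx br (br x y) = ad_mx br y *m ad_mx br x - ad_mx br x *m ad_mx br y.
Proof.
apply: mx_ext => u; rewrite mulmxBr !mulmxA !adP.
case: Hbr => _ _ _ J; have := J x y u.
by rewrite (br_anti u (br x y)) (br_anti u x) brNr => /eqP; rewrite subr_eq0 => /eqP ->.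
Qed.

Lemma adDl x y : ad_mx br (x + y) = ad_mx br x + ad_mx br y.
Proof. by apply: mx_ext => u; rewrite mulmxDr !adP brDl. Qed.
Lemma adZl c x : ad_mx br (c *: x) = c *: ad_mx br x.
Proof. by apply: mx_ext => u; rewrite -scalemxAr !adP brZl. Qed.

Lemma killingDl x y z : killing br (x + y) z = killing br x z + killing br y z.
Proof. by rewrite /killing adDl mulmxDl mxtraceD. Qed.
Lemma killingZl c x z : killing br (c *: x) z = c * killing br x z.
Proof. by rewrite /killing adZl -scalemxAl mxtraceZ. Qed.
Lemma killingC x y : killing br x y = killing br y x.
Proof. by rewrite /killing mxtrace_mulC. Qed.
Lemma killingDr x y z : killing br z (x + y) = killing br z x + killing br z y.
Proof. by rewrite killingC killingDl !(killingC z). Qed.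
Lemma killingZr c x z : killing br z (c *: x) = c * killing br z x.
Proof. by rewrite killingC killingZl killingC. Qed.
Lemma killing0l z : killing br 0 z = 0.
Proof. by rewrite -(scale0r 0) killingZl mul0r. Qed.
Lemma killing0r z : killing br z 0 = 0.
Proof. by rewrite killingC killing0l. Qed.
Lemma killingNl x z : killing br (- x) z = - killing br x z.
Proof. by rewrite -scaleN1r killingZl mulN1r. Qed.
Lemma killingNr x z : killing br z (- x) = - killing br z x.
Proof. by rewrite -scaleN1r killingZr mulN1r. Qed.
Lemma killingBr x y z : killing br z (x - y) = killing br z x - killing br z y.
Proof. by rewrite killingDr killingNr. Qed.
Lemma killing_suml I (r : seq I) (P : pred I) (F : I -> _) x :
  killing br (\sum_(i <- r | P i) F i) x = \sum_(i <- r | P i) killing br (F i) x.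
Proof. by elim/big_rec2: _ => [|i a b _ <-]; rewrite ?killing0l ?killingDl. Qed.
Lemma killing_sumr I (r : seq I) (P : pred I) (F : I -> _) x :
  killing br x (\sum_(i <- r | P i) F i) = \sum_(i <- r | P i) killing br x (F i).
Proof. by elim/big_rec2: _ => [|i a b _ <-]; rewrite ?killing0r ?killingDr. Qed.

Lemma killing_inv x y z : killing br (br x y) z = - killing br y (br x z).
Proof.
rewrite /killing !ad_br mulmxBl mulmxBr !raddfB /= opprK addrC !mulmxA.
by rewrite -(mulmxA (ad_mx br x)) (mxtrace_mulC (ad_mx br x)).
Qed.

End P1.

Lemma c3 (R : realType) : ((2^-1 : R[i])^*)%C = 2^-1.
Proof. have -> : (2^-1 : R[i]) = ((2^-1 : R)%:C)%C by rewrite fmorphV rmorphMn rmorph1.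
 by rewrite conjc_real. Qed.
Lemma conj_i (R : realType) : (('i%C : R[i])^*)%C = - 'i%C.
Proof. by apply/eqP; rewrite eq_complex /= oppr0 !eqxx. Qed.
Lemma conj_ih (R : realType) : ((('i%C : R[i]) / 2)^*)%C = - ('i%C / 2).
Proof. by rewrite (fst (@conjc_is_multiplicative R)) conj_i c3 mulNr. Qed.
Lemma hx (R : realType) (n : nat) (x y : 'rV[R[i]]_n) :
  x = (2^-1 : R[i]) *: (x + y) + 'i%C *: (('i%C / 2) *: (y - x)).
Proof.
rewrite scalerA mulrA -expr2 sqr_i mulN1r scaleNr -scalerN opprB -scalerDr.
rewrite addrACA subrr addr0 -[x in x + x]scale1r -scalerDl scalerA mulVf ?scale1r ?pnatr_eq0 //.
Qed.

Section P2.
Context {R : realType} {n : nat} {br : 'rV[R[i]]_n -> 'rV[R[i]]_n -> 'rV[R[i]]_n}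
  {theta : 'rV[R[i]]_n -> 'rV[R[i]]_n}.
Hypothesis Hbr : lie_bracket br.
Hypothesis Hth : compact_conjugation br theta.

Lemma thD x y : theta (x + y) = theta x + theta y.
Proof. by case: Hth. Qed.
Lemma thZ c x : theta (c *: x) = (c^*)%C *: theta x.
Proof. by case: Hth. Qed.
Lemma thK x : theta (theta x) = x.
Proof. by case: Hth. Qed.
Lemma thbr x y : theta (br x y) = br (theta x) (theta y).
Proof. by case: Hth. Qed.
Lemma th0 : theta 0 = 0.
Proof. by have := thZ 0 0; rewrite scale0r rmorph0 scale0r. Qed.
Lemma thN x : theta (- x) = - theta x.
Proof. by rewrite -scaleN1r thZ rmorphN1 scaleN1r. Qed.
Lemma thB x y : theta (x - y) = theta x - theta y.
Proof. by rewrite thD thN. Qed.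
Lemma thR (r : R) x : theta ((r%:C)%C *: x) = (r%:C)%C *: theta x.
Proof. by rewrite thZ conjc_real. Qed.
Lemma th_i x : theta ('i%C *: x) = - ('i%C *: theta x).
Proof.
by rewrite thZ -scaleNr; congr (_ *: _); apply/eqP; rewrite eq_complex /= oppr0 !eqxx.
Qed.

Definition Bt x y := - killing br x (theta y).

Lemma BtDl x y z : Bt (x + y) z = Bt x z + Bt y z.
Proof. by rewrite /Bt killingDl // opprD. Qed.
Lemma BtZl c x z : Bt (c *: x) z = c * Bt x z.
Proof. by rewrite /Bt killingZl // mulrN. Qed.
Lemma BtDr x y z : Bt z (x + y) = Bt z x + Bt z y.
Proof. by rewrite /Bt thD killingDr // opprD. Qed.
Lemma BtZr c x z : Bt z (c *: x) = (c^*)%C * Bt z x.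
Proof. by rewrite /Bt thZ killingZr // mulrN. Qed.
Lemma Bt0l z : Bt 0 z = 0.
Proof. by rewrite /Bt killing0l // oppr0. Qed.
Lemma Bt0r z : Bt z 0 = 0.
Proof. by rewrite /Bt th0 killing0r // oppr0. Qed.
Lemma Bt_suml I (r : seq I) (P : pred I) (F : I -> _) x :
  Bt (\sum_(i <- r | P i) F i) x = \sum_(i <- r | P i) Bt (F i) x.
Proof. by elim/big_rec2: _ => [|i a b _ <-]; rewrite ?Bt0l ?BtDl. Qed.

Lemma Bt_skew A x y : theta A = A -> Bt (br A x) y = - Bt x (br A y).
Proof.
by move=> hA; rewrite /Bt killing_inv // !opprK thbr hA.
Qed.

Lemma killing_k_le0 y : theta y = y -> killing br y y <= 0.
Proof.
case: Hth => _ _ _ _ H5 hy; have [->|ny] := eqVneq y 0; first by rewrite killing0l.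
exact/ltW/H5.
Qed.

Lemma Bt_pos x : x != 0 -> 0 < Bt x x.
Proof.
move=> nx.
set x1 := (2^-1 : R[i]) *: (x + theta x).
set x2 := ('i%C / 2) *: (theta x - x).
have h1 : theta x1 = x1 by rewrite /x1 thZ thD thK addrC c3.
have h2 : theta x2 = x2.
  by rewrite /x2 thZ thB thK conj_ih scaleNr -scalerN opprB.
have hx : x = x1 + 'i%C *: x2 by exact: hx.
have htx : theta x = x1 - 'i%C *: x2.
  by rewrite {1}hx thD h1 th_i h2.
clearbody x1 x2.
have key : Bt x x = - (killing br x1 x1 + killing br x2 x2).
  rewrite /Bt htx {1}hx killingDl // killingBr // killingBr // !killingZl //.
  rewrite !killingZr // (killingC x2 x1).
  congr (- _).
  by rewrite mulrA -expr2 sqr_i mulN1r; ring.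
rewrite key oppr_gt0.
have l1 := killing_k_le0 _ h1; have l2 := killing_k_le0 _ h2.
case: Hth => _ _ _ _ H5.
have [z1|nz1] := eqVneq x1 0.
  have nz2 : x2 != 0.
    apply: contra nx => /eqP z2; apply/eqP; by rewrite hx z1 z2 scaler0 addr0.
  by rewrite z1 killing0l // add0r; exact: H5.
by have := ltr_leD (H5 _ h1 nz1) l2; rewrite addr0.
Qed.

Lemma Bt_eq0 x : Bt x x = 0 -> x = 0.
Proof.
move=> h; apply/eqP; apply/negPn/negP => nx; have := Bt_pos _ nx; by rewrite h ltxx.
Qed.

End P2.

Lemma conjM (R : realType) (a b : R[i]) : ((a * b)^*)%C = (a^*)%C * (b^*)%C.
Proof. by rewrite (fst (@conjc_is_multiplicative R)). Qed.
Lemma conjD (R : realType) (a b : R[i]) : ((a + b)^*)%C = (a^*)%C + (b^*)%C.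
Proof. by rewrite rmorphD. Qed.
Lemma conjN (R : realType) (a : R[i]) : ((- a)^*)%C = - (a^*)%C.
Proof. by rewrite rmorphN. Qed.
Lemma conjKc (R : realType) (a : R[i]) : ((a^*)^*)%C = a.
Proof. by rewrite conjcK. Qed.
Lemma conj_real_eq (R : realType) (a : R[i]) : (a^*)%C = a -> a = ((complex.Re a)%:C)%C.
Proof.
case: a => a b /= /eqP; rewrite eq_complex /= => /andP[_ /eqP h].
have -> : b = 0 by lra.
by [].
Qed.

Section P3.
Context {R : realType} {n : nat} {br : 'rV[R[i]]_n -> 'rV[R[i]]_n -> 'rV[R[i]]_n}
  {theta : 'rV[R[i]]_n -> 'rV[R[i]]_n} {t : 'rV[R[i]]_n -> Prop}.
Hypothesis Hbr : lie_bracket br.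
Hypothesis Hth : compact_conjugation br theta.
Hypothesis Ht : max_abelian_in br (kset theta) t.

Lemma t0 : t 0. Proof. by case: Ht => -[H _ _] _ _ _. Qed.
Lemma tD {x y} : t x -> t y -> t (x + y). Proof. by case: Ht => -[_ H _] _ _ _; apply: H. Qed.
Lemma tR (r : R) {x} : t x -> t ((r%:C)%C *: x). Proof. by case: Ht => -[_ _ H] _ _ _; apply: H. Qed.
Lemma tN {x} : t x -> t (- x).
Proof.
move=> hx; have := tR (-1) hx.
have -> : ((-1 : R)%:C)%C = -1 :> R[i] by apply/eqP; rewrite eq_complex /= oppr0 !eqxx.
by rewrite scaleN1r.
Qed.
Lemma t_th {x} : t x -> theta x = x. Proof. by case: Ht => _ H _ _ /H. Qed.
Lemma t_comm {x y} : t x -> t y -> br x y = 0. Proof. by case: Ht => _ _ H _; apply: H. Qed.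

Lemma hset_t {A} : t A -> hset t A.
Proof. by move=> hA; exists A, 0; rewrite scaler0 addr0; split=> //; exact: t0. Qed.
Lemma hset0 : hset t 0. Proof. exact/hset_t/t0. Qed.
Lemma hset_iB {B} : t B -> hset t ('i%C *: B).
Proof. by move=> hB; exists 0, B; rewrite add0r; split=> //; exact: t0. Qed.
Lemma hsetD {x y} : hset t x -> hset t y -> hset t (x + y).
Proof.
move=> [A1 [B1 [h1 h2 ->]]] [A2 [B2 [h3 h4 ->]]]; exists (A1 + A2), (B1 + B2).
by split; [exact: tD|exact: tD|]; rewrite scalerDr addrACA.
Qed.

Lemma br_h {Z X} : hset t Z -> t X -> br Z X = 0.
Proof.
move=> [A [B [hA hB ->]]] hX.
by rewrite (brDl Hbr) (brZl Hbr) !t_comm // scaler0 addr0.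
Qed.
Lemma br_hh {Z X} : hset t Z -> hset t X -> br Z X = 0.
Proof.
move=> hZ [A [B [hA hB ->]]].
by rewrite (brDr Hbr) (brZr Hbr) !(br_h hZ) // scaler0 addr0.
Qed.

Lemma h_rs0 {Z} : hset t Z -> root_space br t (fun _ => 0) Z.
Proof. by move=> hZ Z' hZ'; rewrite scale0r br_hh. Qed.

Section Root.
Variable al : 'rV[R[i]]_n -> R[i].
Variable X : 'rV[R[i]]_n.
Hypothesis hX : root_space br t al X.
Hypothesis nX : X != 0.

Lemma root_lin c {Z1 Z2} : hset t Z1 -> hset t Z2 -> hset t (c *: Z1 + Z2) ->
  al (c *: Z1 + Z2) = c * al Z1 + al Z2.
Proof.
move=> h1 h2 h3; apply/eqP; rewrite -subr_eq0; apply/eqP.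
have := hX _ h3; rewrite (brDl Hbr) (brZl Hbr) hX // hX // scalerA -scalerDl => /eqP.
rewrite -subr_eq0 -scalerBl scaler_eq0 (negbTE nX) orbF subr_eq0 => /eqP ->.
by rewrite subrr.
Qed.

Lemma root0 : al 0 = 0.
Proof.
have := root_lin 1 (Z1:=0) (Z2:=0) hset0 hset0; rewrite scale1r addr0 mul1r => /(_ hset0).
move/(congr1 (fun v => v - al 0)); rewrite subrr addrK; by move/esym.
Qed.

Lemma root_AiB {A B} : t A -> t B -> al (A + 'i%C *: B) = al A + 'i%C * al B.
Proof.
move=> hA hB; rewrite (addrC A) root_lin; first by rewrite addrC.
- exact: hset_t.
- exact: hset_t.
by exists A, B; rewrite addrC.
Qed.

Lemma root_iB {B} : t B -> al ('i%C *: B) = 'i%C * al B.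
Proof. by move=> hB; have := root_AiB t0 hB; rewrite add0r root0 add0r. Qed.

Lemma root_imag {A} : t A -> ((al A)^*)%C = - al A.
Proof.
move=> hA; have hth := t_th hA.
have := Bt_skew Hbr Hth A X X hth.
rewrite hX; last exact: hset_t hA.
move=> h; rewrite (BtZl Hbr) (BtZr Hbr Hth) in h; move: h => /eqP.
rewrite -mulNr -subr_eq0 -mulrBl mulf_eq0 => /orP[|].
  by rewrite opprK addrC addr_eq0 => /eqP.
by move=> /eqP /(Bt_eq0 Hbr Hth) /eqP; rewrite (negbTE nX).
Qed.

Lemma root_thZ {Z} : hset t Z -> ((al (theta Z))^*)%C = - al Z.
Proof.
move=> [A [B [hA hB ->]]].
rewrite (thD Hth) (th_i Hth) !t_th // -scaleNr.
have -> : al (A + - 'i%C *: B) = al A - 'i%C * al B.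
  rewrite addrC root_lin; first by rewrite addrC mulNr.
  - exact: hset_t.
  - exact: hset_t.
  by exists A, (- B); split; [done | exact: tN hB | by rewrite scalerN scaleNr addrC].
rewrite root_AiB // conjD conjN conjM conj_i !root_imag //.
ring.
Qed.

Lemma root_real_H {H} : aset t H -> al H = ((complex.Re (al H))%:C)%C.
Proof.
move=> [B [hB ->]]; apply: conj_real_eq.
by rewrite root_iB // conjM conj_i root_imag // mulrNN.
Qed.

End Root.

Lemma hset_th {Z} : hset t Z -> hset t (theta Z).
Proof.
move=> [A [B [hA hB ->]]]; exists A, (- B); split=> //; first exact: tN.
by rewrite (thD Hth) (th_i Hth) !t_th // scalerN.
Qed.

Lemma root_theta {al X} : root_space br t al X ->
  root_space br t (fun Z => - al Z) (theta X).
Proof.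
move=> hX; have [->|nX] := eqVneq X 0.
  by move=> Z hZ; rewrite (th0 Hth) (br0r Hbr) scaler0.
move=> Z hZ /=; rewrite -{1}(thK Hth Z) -(thbr Hth) hX; last exact: hset_th hZ.
by rewrite (thZ Hth) (root_thZ _ _ hX nX hZ).
Qed.

Lemma orth2 {f g x y} : root_space br t f x -> root_space br t g y ->
  (exists Z, hset t Z /\ f Z + g Z != 0) -> killing br x y = 0.
Proof.
move=> hx hy [Z [hZ nz]].
have := killing_inv Hbr Z x y; rewrite hx // hy // (killingZl Hbr) (killingZr Hbr).
move=> /eqP; rewrite -mulNr -subr_eq0 -mulrBl opprK mulf_eq0 (negbTE nz) /=.
by move/eqP.
Qed.

Lemma orth1 {f g x y} : root_space br t f x -> root_space br t g y ->
  (exists Z, hset t Z /\ f Z != g Z) -> @Bt _ _ br theta x y = 0.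
Proof.
move=> hx hy [Z [hZ nz]]; rewrite /Bt (orth2 hx (root_theta hy)) ?oppr0 //.
by exists Z; split=> //; rewrite subr_eq0.
Qed.

Lemma iter_root {al X H} k : root_space br t al X -> hset t H ->
  iter k (br H) X = (al H ^+ k) *: X.
Proof.
move=> hX hH; elim: k => [|k IH]; first by rewrite expr0 scale1r.
by rewrite iterS IH (brZr Hbr) hX // scalerA exprS mulrC.
Qed.

End P3.

Lemma Re_rmul (R : realType) (a : R) (z : R[i]) : complex.Re ((a%:C)%C * z) = a * complex.Re z.
Proof. by case: z => x y /=; ring. Qed.
Lemma Im_rmul (R : realType) (a : R) (z : R[i]) : complex.Im ((a%:C)%C * z) = a * complex.Im z.
Proof. by case: z => x y /=; ring. Qed.

Lemma exp_cvg (R : realType) (r : R) : (series (exp_coeff r) @ \oo --> expR r)%classic.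
Proof. exact: is_cvg_series_exp_coeff. Qed.

Section P4.
Context {R : realType} {n : nat} {br : 'rV[R[i]]_n -> 'rV[R[i]]_n -> 'rV[R[i]]_n}.
Hypothesis Hbr : lie_bracket br.

Lemma Ad_eig H X (r : R) : (forall k, iter k (br H) X = (((r%:C)%C)^+k) *: X) ->
  Ad_exp_rel br H X (((expR r)%:C)%C *: X).
Proof.
move=> hk j.
have e : forall N, \sum_(k < N) ((k`!)%:R)^-1 * (iter k (br H) X) 0 j =
   ((series (exp_coeff r) N)%:C)%C * X 0 j.
  move=> N; rewrite /series /= big_mkord rmorph_sum mulr_suml.
  apply: eq_bigr => k _; rewrite hk mxE /exp_coeff /=.
  by rewrite rmorphM rmorphXn fmorphV rmorph_nat mulrA [_ * _^-1]mulrC.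
split.
  rewrite (_ : (fun _ => _) = (fun N => series (exp_coeff r) N * complex.Re (X 0 j))).
    by rewrite mxE Re_rmul; apply: cvgMl; exact: exp_cvg.
  by apply/funext => N; rewrite e Re_rmul.
rewrite (_ : (fun _ => _) = (fun N => series (exp_coeff r) N * complex.Im (X 0 j))).
  by rewrite mxE Im_rmul; apply: cvgMl; exact: exp_cvg.
by apply/funext => N; rewrite e Im_rmul.
Qed.

Lemma iterD H X1 X2 k : iter k (br H) (X1 + X2) = iter k (br H) X1 + iter k (br H) X2.
Proof. by elim: k => [|k IH] //=; rewrite IH (brDr Hbr). Qed.
Lemma iter0 H k : iter k (br H) 0 = 0.
Proof. by elim: k => [|k IH] //=; rewrite IH (br0r Hbr). Qed.

Lemma ReD (a b : R[i]) : complex.Re (a + b) = complex.Re a + complex.Re b.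
Proof. by case: a; case: b. Qed.
Lemma ImD (a b : R[i]) : complex.Im (a + b) = complex.Im a + complex.Im b.
Proof. by case: a; case: b. Qed.

Lemma Ad_add H X1 Y1 X2 Y2 : Ad_exp_rel br H X1 Y1 -> Ad_exp_rel br H X2 Y2 ->
  Ad_exp_rel br H (X1 + X2) (Y1 + Y2).
Proof.
move=> h1 h2 j; have [a1 b1] := h1 j; have [a2 b2] := h2 j.
have e : forall N, \sum_(k < N) ((k`!)%:R)^-1 * (iter k (br H) (X1 + X2)) 0 j =
  \sum_(k < N) ((k`!)%:R)^-1 * (iter k (br H) X1) 0 j +
  \sum_(k < N) ((k`!)%:R)^-1 * (iter k (br H) X2) 0 j.
  by move=> N; rewrite -big_split /=; apply: eq_bigr => k _; rewrite iterD mxE mulrDr.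
split.
  rewrite (_ : (fun _ => _) = (fun N => complex.Re (\sum_(k < N) ((k`!)%:R)^-1 * (iter k (br H) X1) 0 j) +
     complex.Re (\sum_(k < N) ((k`!)%:R)^-1 * (iter k (br H) X2) 0 j))).
    by rewrite mxE ReD; apply: cvgD.
  by apply/funext => N; rewrite e ReD.
rewrite (_ : (fun _ => _) = (fun N => complex.Im (\sum_(k < N) ((k`!)%:R)^-1 * (iter k (br H) X1) 0 j) +
   complex.Im (\sum_(k < N) ((k`!)%:R)^-1 * (iter k (br H) X2) 0 j))).
  by rewrite mxE ImD; apply: cvgD.
by apply/funext => N; rewrite e ImD.
Qed.

Lemma Ad_zero H : Ad_exp_rel br H 0 0.
Proof.
move=> j.
have e : forall N, \sum_(k < N) ((k`!)%:R)^-1 * (iter k (br H) 0) 0 j = 0.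
  by move=> N; apply: big1 => k _; rewrite iter0 mxE mulr0.
split; rewrite (_ : (fun _ => _) = (fun N => 0)) ?mxE /=; try exact: cvg_cst;
  by apply/funext => N; rewrite e.
Qed.

Lemma Ad_sum H (I : Type) (r : seq I) (P : pred I) (Xf Yf : I -> 'rV[R[i]]_n) :
  (forall i, P i -> Ad_exp_rel br H (Xf i) (Yf i)) ->
  Ad_exp_rel br H (\sum_(i <- r | P i) Xf i) (\sum_(i <- r | P i) Yf i).
Proof.
move=> h; elim/big_rec2: _ => [|i a b Pi IH]; first exact: Ad_zero.
exact: Ad_add (h i Pi) IH.
Qed.

Lemma Ad_unique H X Y1 Y2 : Ad_exp_rel br H X Y1 -> Ad_exp_rel br H X Y2 -> Y1 = Y2.
Proof.
move=> h1 h2; apply/rowP => j; have [a1 b1] := h1 j; have [a2 b2] := h2 j.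
have eR : complex.Re (Y1 0 j) = complex.Re (Y2 0 j) := cvg_unique _ a1 a2.
have eI : complex.Im (Y1 0 j) = complex.Im (Y2 0 j) := cvg_unique _ b1 b2.
move: eR eI; case: (Y1 0 j) => a b; case: (Y2 0 j) => c d e1 e2.
by congr Complex; [exact: e1 | exact: e2].
Qed.

End P4.

Section P5.
Context {R : realType} {n l : nat} {br : 'rV[R[i]]_n -> 'rV[R[i]]_n -> 'rV[R[i]]_n}
  {t : 'rV[R[i]]_n -> Prop} {alpha : 'I_l -> 'rV[R[i]]_n -> R[i]}.
Hypothesis Hs : simple_system br t alpha.

Lemma coeff_zero (m : 'I_l -> int) :
  (forall Z, hset t Z -> \sum_(i < l) (m i)%:~R * alpha i Z = 0) -> forall i, m i = 0.
Proof.
case: Hs => _ H2 _ h i; have := H2 (fun i => (m i)%:~R) h i.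
by move/eqP; rewrite intr_eq0 => /eqP.
Qed.

Lemma coeff_unique {al al' m m'} : root_coeffs t alpha al m -> root_coeffs t alpha al' m' ->
  (forall Z, hset t Z -> al Z = al' Z) -> forall i, m i = m' i.
Proof.
move=> h h' e i; apply/eqP; rewrite -subr_eq0; apply/eqP; move: i.
apply: coeff_zero => Z hZ.
under eq_bigr => i _ do rewrite intrB mulrBl.
by rewrite sumrB -h // -h' // e // subrr.
Qed.

Lemma coeff_neg {al m} : root_coeffs t alpha al m ->
  root_coeffs t alpha (fun Z => - al Z) (fun i => - m i).
Proof.
move=> h Z hZ; rewrite h // -sumrN; apply: eq_bigr => i _.
by rewrite intrN mulNr.
Qed.

Lemma coeff_add {al al' m m'} : root_coeffs t alpha al m -> root_coeffs t alpha al' m' ->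
  root_coeffs t alpha (fun Z => al Z + al' Z) (fun i => m i + m' i).
Proof.
move=> h h' Z hZ; rewrite h // h' // -big_split; apply: eq_bigr => i _.
by rewrite intrD mulrDl.
Qed.

Lemma root_nz {al} : is_root br t al -> exists Z, hset t Z /\ al Z != 0.
Proof. by case. Qed.

Lemma pos_pos {b b'} : is_pos_root br t alpha b -> is_pos_root br t alpha b' ->
  exists Z, hset t Z /\ b Z + b' Z != 0.
Proof.
move=> [rb [m [hm pm]]] [rb' [m' [hm' pm']]].
apply/not_existsP => hall.
have e : forall Z, hset t Z -> b Z + b' Z = 0.
  move=> Z hZ; apply/eqP; apply/negPn/negP => nz; apply: (hall Z); by split.
have z : forall i, m i + m' i = 0.
  apply: coeff_zero => Z hZ; rewrite -(coeff_add hm hm') //; exact: e.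
have z0 : forall i, m i = 0.
  by move=> i; have := z i; move/eqP; rewrite paddr_eq0 ?pm ?pm' // => /andP[/eqP -> _].
have [Z [hZ nz]] := root_nz rb.
by move: nz; rewrite hm // big1 ?eqxx // => i _; rewrite z0 mul0r.
Qed.

Lemma notS_eq (s : 'I_l -> int) {b g mg} : is_root br t b -> ~ in_span_S br t alpha s b ->
  root_coeffs t alpha g mg -> (forall i, mg i != 0 -> s i != 0) ->
  exists Z, hset t Z /\ b Z != g Z.
Proof.
move=> rb nb hg sg; apply/not_existsP => hall; apply: nb; split=> //.
exists mg; split=> // Z hZ; rewrite -hg //.
by apply/eqP; apply/negPn/negP => nz; apply: (hall Z).
Qed.

Lemma notS_neg (s : 'I_l -> int) {b g mg} : is_root br t b -> ~ in_span_S br t alpha s b ->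
  root_coeffs t alpha g mg -> (forall i, mg i != 0 -> s i != 0) ->
  exists Z, hset t Z /\ b Z + g Z != 0.
Proof.
move=> rb nb hg sg; apply/not_existsP => hall; apply: nb; split=> //.
exists (fun i => - mg i); split.
  move=> Z hZ; rewrite -(coeff_neg hg) //.
  apply/eqP; rewrite -addr_eq0; apply/negPn/negP => nz; exact: (hall Z).
by move=> i; rewrite oppr_eq0; exact: sg.
Qed.

End P5.

Lemma sigma_valN l (s : 'I_l -> int) m : sigma_val s (fun i => - m i) = sigma_val s m.
Proof. by apply: eq_bigr => i _; rewrite abszN. Qed.

Lemma sigma_span l (s : 'I_l -> int) m : sigma_val s m != 0 -> forall i, m i != 0 -> s i != 0.
Proof.
move=> h i nm; move: h; rewrite /sigma_val (bigD1 i) //= mulf_eq0 negb_or => /andP[h _].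
by move: h; rewrite expf_eq0 negb_and absz_gt0 nm.
Qed.

Lemma sigma_cases l (s : 'I_l -> int) m : ext_signature s ->
  sigma_val s m = 1 \/ sigma_val s m <= 0.
Proof.
move=> hs.
have : sigma_val s m \in [:: -1; 0; 1].
  rewrite /sigma_val; apply: (big_ind (fun x : int => x \in [:: -1; 0; 1])).
  - by rewrite !inE eqxx orbT.
  - move=> x y; rewrite !inE => /or3P[] /eqP -> /or3P[] /eqP ->; by rewrite ?eqxx ?orbT.
  move=> i _; elim: `|m i|%N => [|k IH]; first by rewrite expr0 !inE eqxx !orbT.
  rewrite exprS; move: (hs i) IH; rewrite !inE => /or3P[] /eqP -> /or3P[] /eqP ->;
    by rewrite ?eqxx ?orbT.
by rewrite !inE => /or3P[] /eqP ->; [right|right|left].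
Qed.

Lemma conj_int (R : realType) (z : int) : (((z%:~R : R[i]))^*)%C = z%:~R.
Proof.
have -> : (z%:~R : R[i]) = ((z%:~R : R)%:C)%C by rewrite rmorph_int.
by rewrite conjc_real.
Qed.

Lemma real_int (R : realType) (z : int) : (z%:~R : R[i]) = ((z%:~R : R)%:C)%C.
Proof. by rewrite rmorph_int. Qed.

Lemma class_dec (T U : Type) (P : T -> Prop) (f g : T -> U) :
  (exists Z, P Z /\ f Z <> g Z) \/ (forall Z, P Z -> f Z = g Z).
Proof.
case: (pselect (forall Z, P Z -> f Z = g Z)) => [h|h]; [by right|left].
apply: contrapT => hn; apply: h => Z hZ.
by apply: contrapT => ne; apply: hn; exists Z.
Qed.

Section P6.
Context {R : realType} {n l : nat} {br : 'rV[R[i]]_n -> 'rV[R[i]]_n -> 'rV[R[i]]_n}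
  {theta : 'rV[R[i]]_n -> 'rV[R[i]]_n} {t : 'rV[R[i]]_n -> Prop}
  {alpha : 'I_l -> 'rV[R[i]]_n -> R[i]} {s : 'I_l -> int} {H : 'rV[R[i]]_n}.
Hypothesis Hbr : lie_bracket br.
Hypothesis Hth : compact_conjugation br theta.
Hypothesis Ht : max_abelian_in br (kset theta) t.
Hypothesis Hs : simple_system br t alpha.
Hypothesis Hsig : ext_signature s.
Hypothesis haH : aset t H.

Local Notation Btt := (@Bt _ _ br theta).
Local Notation V := ('rV[R[i]]_n).

Lemma hH : hset t H.
Proof. move: haH => [B [hB eH]]; rewrite eH; exact: (hset_iB Ht hB). Qed.

Lemma Bt_sumr I (r : seq I) (P : pred I) (F : I -> V) (x : V) :
  Btt x (\sum_(i <- r | P i) F i) = \sum_(i <- r | P i) Btt x (F i).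
Proof. by elim/big_rec2: _ => [|i a b _ <-]; rewrite ?(Bt0r Hbr Hth) ?(BtDr Hbr Hth). Qed.

Lemma rs_scale f c Y : root_space br t f Y -> root_space br t f (c *: Y).
Proof. by move=> h Z hZ; rewrite (brZr Hbr) h // !scalerA mulrC. Qed.

Lemma realH f : is_root br t f -> f H = ((complex.Re (f H))%:C)%C.
Proof. by move=> [_ [Y [nY hY]]]; exact: (root_real_H Hbr Hth Ht f Y hY nY haH). Qed.

Lemma Ad_root f Y (r : R) : root_space br t f Y -> f H = (r%:C)%C ->
  Ad_exp_rel br H Y (((expR r)%:C)%C *: Y).
Proof.
move=> hY hr; apply: Ad_eig => k.
by rewrite (iter_root Hbr k hY hH) hr.
Qed.

Lemma Ad_fix Y : br H Y = 0 -> Ad_exp_rel br H Y Y.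
Proof.
move=> h; have := @Ad_eig _ _ br H Y 0.
rewrite expR0 scale1r; apply => k; case: k => [|k]; first by rewrite expr0 scale1r.
have -> : ((0 : R)%:C)%C = 0 :> R[i] by [].
rewrite expr0n /= scale0r.
by elim: k => [|k IH] //=; rewrite ?h // IH (br0r Hbr).
Qed.


Section Main.
Hypothesis hR : forall (al : V -> R[i]) (m : 'I_l -> int),
  is_root br t al -> root_coeffs t alpha al m -> sigma_val s m = 1 -> al H != 0.
Variables (X Z A : V) (k : nat) (al_ : 'I_k -> V -> R[i]) (m_ : 'I_k -> 'I_l -> int)
  (W : 'I_k -> V) (kB : nat) (Vv : 'I_kB -> V) (be : 'I_kB -> V -> R[i]).
Hypothesis hZ : hset t Z.
Hypothesis hj : forall j, [/\ in_span_S br t alpha s (al_ j),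
                       root_coeffs t alpha (al_ j) (m_ j) &
                       root_space br t (al_ j) (W j)].
Hypothesis hV : forall kk, [/\ is_pos_root br t alpha (be kk),
                                  ~ in_span_S br t alpha s (be kk) &
                                  root_space br t (be kk) (Vv kk)].
Hypothesis eTA : theta A = Z + \sum_(j < k) W j.
Hypothesis eA : A = Z + \sum_(j < k) ((sigma_val s (m_ j))%:~R : R[i]) *: W j.
Hypothesis hAd : Ad_exp_rel br H (A + \sum_(kk < kB) Vv kk) X.
Hypothesis hX : theta X = X.

Let sg j : R[i] := ((sigma_val s (m_ j))%:~R : R[i]).
Let r_ j := complex.Re (al_ j H).
Let rb kk := complex.Re (be kk H).
Let T j := ((expR (r_ j))%:C)%C *: (sg j *: W j).
Let D kk := ((expR (rb kk))%:C)%C *: Vv kk.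

Lemma rootj j : is_root br t (al_ j). Proof. by case: (hj j) => -[]. Qed.
Lemma coj j : root_coeffs t alpha (al_ j) (m_ j). Proof. by case: (hj j). Qed.
Lemma rsj j : root_space br t (al_ j) (W j). Proof. by case: (hj j). Qed.
Lemma spj j : forall i, m_ j i != 0 -> s i != 0.
Proof.
case: (hj j) => -[_ [m' [hm' sp]]] hm _ i nz.
by apply: sp; rewrite (coeff_unique Hs hm hm' (fun _ _ => erefl)) in nz.
Qed.
Lemma posk kk : is_pos_root br t alpha (be kk). Proof. by case: (hV kk). Qed.
Lemma rootk kk : is_root br t (be kk). Proof. by case: (posk kk). Qed.
Lemma nSk kk : ~ in_span_S br t alpha s (be kk). Proof. by case: (hV kk). Qed.
Lemma rsk kk : root_space br t (be kk) (Vv kk). Proof. by case: (hV kk). Qed.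

Lemma eX : X = Z + \sum_(j < k) T j + \sum_(kk < kB) D kk.
Proof.
apply: (Ad_unique H (A + \sum_(kk < kB) Vv kk)) => //.
rewrite eA; apply: (Ad_add Hbr); first apply: (Ad_add Hbr).
- by apply: Ad_fix; rewrite (br_hh Hbr Ht hH hZ).
- apply: (Ad_sum Hbr) => j _; apply: (Ad_root (al_ j)).
    exact/rs_scale/rsj.
  exact/realH/rootj.
- apply: (Ad_sum Hbr) => kk _; apply: (Ad_root (be kk)).
    exact: rsk.
  exact/realH/rootk.
Qed.

Lemma BtW_Z j : Btt (W j) Z = 0.
Proof.
apply: (orth1 Hbr Hth Ht (rsj j) (h_rs0 Hbr Ht hZ)).
by have [Z0 [h0 nz]] := root_nz (rootj j); exists Z0.
Qed.
Lemma kW_Z j : killing br (W j) Z = 0.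
Proof.
apply: (orth2 Hbr (rsj j) (h_rs0 Hbr Ht hZ)).
by have [Z0 [h0 nz]] := root_nz (rootj j); exists Z0; rewrite addr0.
Qed.
Lemma kV_Z kk : killing br (Vv kk) Z = 0.
Proof.
apply: (orth2 Hbr (rsk kk) (h_rs0 Hbr Ht hZ)).
by have [Z0 [h0 nz]] := root_nz (rootk kk); exists Z0; rewrite addr0.
Qed.
Lemma kV_W kk j : killing br (Vv kk) (W j) = 0.
Proof. exact: (orth2 Hbr (rsk kk) (rsj j) (notS_neg s (rootk kk) (nSk kk) (coj j) (spj j))). Qed.
Lemma kW_V j kk : killing br (W j) (Vv kk) = 0.
Proof. by rewrite killingC kV_W. Qed.
Lemma kV_V kk kk' : killing br (Vv kk) (Vv kk') = 0.
Proof. exact: (orth2 Hbr (rsk kk) (rsk kk') (pos_pos Hs (posk kk) (posk kk'))). Qed.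
Lemma BtW_V j kk : Btt (W j) (Vv kk) = 0.
Proof.
apply: (orth1 Hbr Hth Ht (rsj j) (rsk kk)).
have [Z0 [h0 nz]] := notS_eq s (rootk kk) (nSk kk) (coj j) (spj j).
by exists Z0; rewrite eq_sym.
Qed.

Lemma BtV_X kk : Btt (Vv kk) X = 0.
Proof.
rewrite /Bt hX eX !(killingDr Hbr) !(killing_sumr Hbr) kV_Z.
rewrite big1 => [|j _]; last by rewrite /T !(killingZr Hbr) kV_W !mulr0.
rewrite big1 => [|kk' _]; last by rewrite /D (killingZr Hbr) kV_V mulr0.
by rewrite !addr0 oppr0.
Qed.

Lemma ReN' (z : R[i]) : complex.Re (- z) = - complex.Re z.
Proof. by case: z. Qed.

Lemma BtW_X j0 : Btt (W j0) X = 0.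
Proof.
set w := W j0.
set q := \sum_(j < k) Btt w (W j).
set p := \sum_(j < k) killing br w (W j).
set e := ((expR (r_ j0))%:C)%C : R[i].
set e' := ((expR (- r_ j0))%:C)%C : R[i].
have t1 : forall j, Btt w (sg j *: W j) = sg j0 * Btt w (W j).
  move=> j; rewrite (BtZr Hbr Hth) /sg conj_int.
  case: (class_dec _ _ (hset t) (al_ j0) (al_ j)) => [[Z0 [h0 ne]]|eq].
    by rewrite (orth1 Hbr Hth Ht (rsj j0) (rsj j)) ?mulr0 //; exists Z0; split => //; exact/eqP.
  have em := coeff_unique Hs (coj j0) (coj j) eq.
  by have -> : sigma_val s (m_ j) = sigma_val s (m_ j0) by apply: eq_bigr => i _; rewrite em.
have t2 : forall j, Btt w (T j) = e * sg j0 * Btt w (W j).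
  move=> j; rewrite /T (BtZr Hbr Hth) conjc_real t1 mulrA.
  case: (class_dec _ _ (hset t) (al_ j0) (al_ j)) => [[Z0 [h0 ne]]|eq].
    by rewrite (orth1 Hbr Hth Ht (rsj j0) (rsj j)) ?mulr0 //; exists Z0; split => //; exact/eqP.
  by rewrite /e /r_ (eq H hH).
have t3 : forall j, killing br w (T j) = e' * sg j0 * killing br w (W j).
  move=> j; rewrite /T !(killingZr Hbr) mulrA.
  case: (class_dec _ _ (hset t) (fun Z => - al_ j0 Z) (al_ j)) => [[Z0 [h0 ne]]|eq].
    rewrite (orth2 Hbr (rsj j0) (rsj j)) ?mulr0 //; exists Z0; split => //.
    by apply/eqP => h; apply: ne; apply/eqP; rewrite eq_sym -addr_eq0 addrC h.
  have em := coeff_unique Hs (coeff_neg (coj j0)) (coj j) eq.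
  rewrite /sg.
  have -> : sigma_val s (m_ j) = sigma_val s (m_ j0).
    by rewrite -(sigma_valN _ s (m_ j0)); apply: eq_bigr => i _; rewrite em.
  by rewrite /e' /r_ -(eq H hH) ReN'.
have eBX : Btt w X = e * sg j0 * q.
  rewrite eX !(BtDr Hbr Hth) !Bt_sumr BtW_Z add0r.
  rewrite [X in _ + X]big1 => [|kk _]; last by rewrite /D (BtZr Hbr Hth) BtW_V mulr0.
  by rewrite addr0 /q mulr_sumr; apply: eq_bigr => j _; rewrite t2.
have ekX : killing br w X = e' * sg j0 * p.
  rewrite eX !(killingDr Hbr) !(killing_sumr Hbr) kW_Z add0r.
  rewrite [X in _ + X]big1 => [|kk _]; last by rewrite /D (killingZr Hbr) kW_V mulr0.
  by rewrite addr0 /p mulr_sumr; apply: eq_bigr => j _; rewrite t3.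
have eBA : Btt w A = sg j0 * q.
  rewrite eA (BtDr Hbr Hth) Bt_sumr BtW_Z add0r.
  by rewrite /q mulr_sumr; apply: eq_bigr => j _; rewrite t1.
have ekA : killing br w (theta A) = p.
  by rewrite eTA (killingDr Hbr) (killing_sumr Hbr) kW_Z add0r.
have pq : p = - (sg j0 * q) by rewrite -eBA /Bt ekA opprK.
have key : e * sg j0 * q = e' * sg j0 * (sg j0 * q).
  by rewrite -eBX {1}/Bt hX ekX pq mulrN opprK.
have : (sg j0 * q) * (e - e' * sg j0) = 0.
  have -> : (sg j0 * q) * (e - e' * sg j0) = e * sg j0 * q - e' * sg j0 * (sg j0 * q) by ring.
  by rewrite key subrr.
move/eqP; rewrite mulf_eq0 => /orP[/eqP h0 | /eqP h1].
  by rewrite eBX -mulrA h0 mulr0.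
exfalso.
set sR := ((sigma_val s (m_ j0))%:~R : R).
have h2 : expR (r_ j0) - expR (- r_ j0) * sR = 0.
  move: h1; rewrite /e /e' /sg real_int -/sR => h1.
  apply: (@complexI R); rewrite rmorphB rmorphM h1.
  by apply/eqP; rewrite eq_complex /= !eqxx.
have ep := expR_gt0 (r_ j0); have ep' := expR_gt0 (- r_ j0).
case: (sigma_cases _ s (m_ j0) Hsig) => hs.
  move: h2; rewrite /sR hs /= mulr1 => /eqP; rewrite subr_eq0 => /eqP /expR_inj hr.
  have r0 : r_ j0 = 0 by lra.
  have := hR _ _ (rootj j0) (coj j0) hs; rewrite (realH _ (rootj j0)).
  by rewrite -/(r_ j0) r0 eqxx.
have sR0 : sR <= 0 by rewrite /sR lerz0.
have : expR (- r_ j0) * sR <= 0 by apply: mulr_ge0_le0 => //; exact: ltW.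
lra.
Qed.

Lemma BtV_Z kk : Btt (Vv kk) Z = 0.
Proof.
apply: (orth1 Hbr Hth Ht (rsk kk) (h_rs0 Hbr Ht hZ)).
by have [Z0 [h0 nz]] := root_nz (rootk kk); exists Z0.
Qed.

Lemma X_in_t : t X.
Proof.
set U := \sum_(j < k) T j + \sum_(kk < kB) D kk.
have eXU : X = Z + U by rewrite /U addrA; exact: eX.
have hUX : Btt U X = 0.
  rewrite /U (BtDl Hbr) !(Bt_suml Hbr).
  rewrite big1 => [|j _]; last by rewrite /T !(BtZl Hbr) BtW_X !mulr0.
  by rewrite big1 ?addr0 // => kk _; rewrite /D (BtZl Hbr) BtV_X mulr0.
have hUZ : Btt U Z = 0.
  rewrite /U (BtDl Hbr) !(Bt_suml Hbr).
  rewrite big1 => [|j _]; last by rewrite /T !(BtZl Hbr) BtW_Z !mulr0.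
  by rewrite big1 ?addr0 // => kk _; rewrite /D (BtZl Hbr) BtV_Z mulr0.
have hUU : Btt U U = 0.
  by move: hUX; rewrite {1}eXU (BtDr Hbr Hth) hUZ add0r.
have U0 := Bt_eq0 Hbr Hth _ hUU.
have eXZ : X = Z by rewrite eXU U0 addr0.
move: hZ => [A0 [B0 [hA0 hB0 eZ]]].
have : theta X = X := hX.
rewrite eXZ eZ (thD Hth) (th_i Hth) (t_th Ht hA0) (t_th Ht hB0) => /addrI he.
have : ('i%C + 'i%C) *: B0 = 0 by rewrite scalerDl -{1}he addNr.
move/eqP; rewrite scaler_eq0 => /orP[/eqP hi|/eqP ->].
  by move: hi => /eqP; rewrite eq_complex /= => /andP[_ /eqP]; lra.
by rewrite scaler0 addr0.
Qed.

End Main.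

End P6.

Theorem proposition7p10 (R : realType) (n l : nat)
  (br : 'rV[R[i]]_n -> 'rV[R[i]]_n -> 'rV[R[i]]_n)
  (theta : 'rV[R[i]]_n -> 'rV[R[i]]_n)
  (t : 'rV[R[i]]_n -> Prop)
  (alpha : 'I_l -> 'rV[R[i]]_n -> R[i])
  (s : 'I_l -> int) (H : 'rV[R[i]]_n) :
  lie_bracket br ->
  semisimple br ->
  compact_conjugation br theta ->
  max_abelian_in br (kset theta) t ->
  simple_system br t alpha ->
  ext_signature s ->
  aset t H ->
  m_sigma1 br t alpha s H ->
  ((forall X, l_H_sigma br theta t alpha s H X /\ kset theta X <-> t X) <->
   (forall (al : 'rV[R[i]]_n -> R[i]) (m : 'I_l -> int),
      is_root br t al -> root_coeffs t alpha al m ->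
      sigma_val s m = 1 -> al H != 0)).
Proof.
move=> Hbr _ Hth Ht Hs Hsig haH _.
have hH := hH Ht haH.
split.
  move=> hL al m ral hm hsig; apply/negP => /eqP alH0.
  have [_ [E [nE hE]]] := ral.
  have hF := root_theta Hbr Hth Ht hE.
  set F := theta E in hF.
  have nF : F != 0.
    apply: contra nE => /eqP F0; apply/eqP; by rewrite -(thK Hth E) -/F F0 (th0 Hth).
  have hsp : forall i, m i != 0 -> s i != 0 by apply: sigma_span; rewrite hsig.
  have [Z0 [hZ0 nz]] := root_nz ral.
  have ralN : is_root br t (fun Z => - al Z).
    split; last by exists F.
    by exists Z0; split => //; rewrite oppr_eq0.
  have spA : in_span_S br t alpha s al by split => //; exists m.
  have spN : in_span_S br t alpha s (fun Z => - al Z).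
    split => //; exists (fun i => - m i); split; first exact: coeff_neg hm.
    by move=> i; rewrite oppr_eq0; exact: hsp.
  set X := E + F.
  have hXX : theta X = X by rewrite /X (thD Hth) (thK Hth) addrC.
  have brHX : br H X = 0.
    by rewrite /X (brDr Hbr) hE // hF // alH0 oppr0 !scale0r addr0.
  set Y := fun j : 'I_2 => if j == ord0 then E else F.
  have eY : \sum_(j < 2) Y j = X by rewrite big_ord_recl big_ord1.
  have tX : t X.
    apply: (proj1 (hL X)); split => //.
    exists X; split; last exact: (Ad_fix Hbr).
    exists X, 0; split.
    - exists 2, Y; split => // j; right; rewrite /Y.
      by case: ifP => _; [exists al | exists (fun Z => - al Z)].
    - rewrite hXX.
      exists 0, 2, (fun j : 'I_2 => if j == ord0 then al else (fun Z => - al Z)),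
        (fun j : 'I_2 => if j == ord0 then m else (fun i => - m i)), Y.
      split.
      + exact: (hset0 Ht).
      + by move=> j; rewrite /Y; case: ifP => _; split => //; exact: coeff_neg hm.
      + by rewrite add0r eY.
      + rewrite add0r -{1}eY; apply: eq_bigr => j _.
        by rewrite /Y; case: ifP => _; rewrite ?sigma_valN hsig scale1r.
    - by exists 0, (fun _ => 0); split; [case | rewrite big_ord0].
    - by rewrite addr0.
  have := br_h Hbr Ht hZ0 tX.
  rewrite /X (brDr Hbr) hE // hF // => /eqP; rewrite scaleNr subr_eq0 => /eqP hEF.
  have EF : E = F.
    move/eqP: hEF; rewrite -subr_eq0 -scalerBr scaler_eq0 (negbTE nz) /= subr_eq0.
    by move/eqP.
  have h1 := hE Z0 hZ0; have h2 := hF Z0 hZ0.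
  rewrite -EF h1 in h2; move/eqP: h2.
  rewrite -subr_eq0 -scalerBl opprK scaler_eq0 (negbTE nE) orbF.
  by rewrite -mulr2n mulrn_eq0 (negbTE nz).
move=> hR X; split.
  move=> [[Y [[A [B [_ aA nB eY]]] hAd]] hX].
  move: aA => [Z [k [al_ [m_ [W [hZ hj eTA eA]]]]]].
  move: nB => [kB [Vv [hVv eB]]].
  have [be hbe] := choice hVv.
  have hV : forall kk, [/\ is_pos_root br t alpha (be kk),
                                  ~ in_span_S br t alpha s (be kk) &
                                  root_space br t (be kk) (Vv kk)] by move=> kk; case: (hbe kk).
  have hAd' : Ad_exp_rel br H (A + \sum_(kk < kB) Vv kk) X by rewrite -eB -eY.
  exact: (X_in_t Hbr Hth Ht Hs Hsig haH hR X Z A k al_ m_ W kB Vv be hZ hj hV eTA eA hAd' hX).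
move=> tX; split; last exact: (t_th Ht tX).
exists X; split; last exact: (Ad_fix Hbr) (br_h Hbr Ht hH tX).
exists X, 0; split.
- exists 1, (fun _ => X); split; first by move=> j; left; exact: (hset_t Ht tX).
  by rewrite big_ord1.
- rewrite (t_th Ht tX).
  exists X, 0, (fun _ => fun _ => 0), (fun _ _ => 0), (fun _ => 0); split.
  + exact: (hset_t Ht tX).
  + by case.
  + by rewrite big_ord0 addr0.
  + by rewrite big_ord0 addr0.
- by exists 0, (fun _ => 0); split; [case | rewrite big_ord0].
- by rewrite addr0.
Qed.
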